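(* Let $\mathcal L,\mathcal L'\in\mathfrak o$ and $\beta\in{}_{\mathcal L'}\underline W_{\mathcal L}$. (1) If $\gamma\in{}_{\mathcal L''}\underline W_{\mathcal L'}$, left multiplication by $w^\gamma$ is an isomorphism of posets $(\beta,\le_\beta)\xrightarrow{\sim}(\gamma\beta,\le_{\gamma\beta})$. (2) If $\delta\in{}_{\mathcal L}\underline W_{\mathcal L''}$, right multiplication by $w^\delta$ is an isomorphism of posets $(\beta,\le_\beta)\xrightarrow{\sim}(\beta\delta,\le_{\beta\delta})$. (3) For $w,w'\in\beta$, if $w'\le_\beta w$ then $w'\le w$ in the Bruhat order of $W$.
   Context: $G$ is a connected split reductive group over a finite field, $B\supset T$ a Borel subgroup and split maximal torus, $\Phi^+$ the positive roots, $W=N_G(T)/T$ with simple reflections determined by $B$ and Bruhat order $\le$. $\mathrm{Ch}(T)$: rank-one character sheaves on $T$, with $W$-action $w\mathcal L=(w^{-1})^*\mathcal L$; $\mathfrak o$ a $W$-orbit, $\mathcal L,\mathcal L',\mathcal L''\in\mathfrak o$. $W^\circ_{\mathcal L}$ is the subgroup generated by reflections $r_\alpha$ for roots $\alpha$ with $(\alpha^\vee)^*\mathcal L$ trivial on $\mathbb G_m$; it is a Coxeter group with simple reflections given by the simple roots of $\Phi_{\mathcal L}\cap\Phi^+$, with its own Bruhat order $\le_{W^\circ_{\mathcal L}}$. ${}_{\mathcal L'}W_{\mathcal L}=\{w:w\mathcal L=\mathcal L'\}$; blocks are elements of ${}_{\mathcal L'}\underline W_{\mathcal L}={}_{\mathcal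 L'}W_{\mathcal L}/W^\circ_{\mathcal L}$, with product $\gamma\beta=\{w_1w_2:w_1\in\gamma,w_2\in\beta\}$. Each block $\beta$ has a unique Bruhat-minimal element $w^\beta$ and every element of $\beta$ is uniquely $w^\beta x$, $x\in W^\circ_{\mathcal L}$. The partial order $\le_\beta$ on $\beta$: $w^\beta x'\le_\beta w^\beta x$ iff $x'\le_{W^\circ_{\mathcal L}}x$. *)

(* Defs.v *)
From HB Require Import structures.
From mathcomp Require Import all_boot all_order all_algebra.
From Stdlib Require Import Relations.
Set Implicit Arguments. Unset Strict Implicit. Unset Printing Implicit Defensive.
Import GRing.Theory Num.Theory.
Local Open Scope ring_scope.

(* Root datum of (G,T): cocharacters X_*(T) = 'cV[int]_n (column vectors),  *)
(* characters X^*(T) = 'rV[int]_n (row vectors), roots indexed by 'I_m.     *)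

Definition pairing (n : nat) (chi : 'rV[int]_n) (lam : 'cV[int]_n) : int :=
  (chi *m lam) ord0 ord0.

(* reduced root datum axioms (Springer 7.4.1, plus reducedness) *)
Definition root_datum (n m : nat) (root : 'I_m -> 'rV[int]_n)
    (coroot : 'I_m -> 'cV[int]_n) : Prop :=
  injective root /\
  (forall i, pairing (root i) (coroot i) = 2) /\
  (forall i j, exists k,
      root k = root j - (pairing (root j) (coroot i)) *: root i /\
      coroot k = coroot j - (pairing (root i) (coroot j)) *: coroot i) /\
  (forall i j (c : int), root j = c *: root i -> c = 1 \/ c = -1).

Definition refl_mx (n m : nat) (root : 'I_m -> 'rV[int]_n)
    (coroot : 'I_m -> 'cV[int]_n) (i : 'I_m) : 'M[int]_n :=
  1%:M - coroot i *m root i.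

(* positive system determined by B: given by a generic cocharacter f *)
Definition generic (n m : nat) (root : 'I_m -> 'rV[int]_n) (f : 'cV[int]_n) :=
  forall i, pairing (root i) f != 0.

Definition positive (n m : nat) (root : 'I_m -> 'rV[int]_n) (f : 'cV[int]_n)
    (i : 'I_m) : Prop := 0 < pairing (root i) f.

(* simple roots of the positive system P' := {i | Q i /\ positive i} of the
   (sub)root system {i | Q i}: the indecomposable positive roots *)
Definition simple_in (n m : nat) (root : 'I_m -> 'rV[int]_n) (f : 'cV[int]_n)
    (Q : 'I_m -> Prop) (i : 'I_m) : Prop :=
  Q i /\ positive root f i /\
  ~ (exists j k, Q j /\ positive root f j /\ Q k /\ positive root f k /\
                 root i = root j + root k).

Definition word_prod (n : nat) (s : seq 'M[int]_n) : 'M[int]_n :=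
  foldr (fun g M => g *m M) 1%:M s.

Definition is_word (n : nat) (S : 'M[int]_n -> Prop) (s : seq 'M[int]_n) :=
  forall g, g \in s -> S g.

Definition gen_by (n : nat) (S : 'M[int]_n -> Prop) (w : 'M[int]_n) : Prop :=
  exists s, is_word S s /\ word_prod s = w.

Definition reduced_word (n : nat) (S : 'M[int]_n -> Prop) (s : seq 'M[int]_n)
    (w : 'M[int]_n) : Prop :=
  is_word S s /\ word_prod s = w /\
  forall s', is_word S s' -> word_prod s' = w -> (size s <= size s')%N.

Definition cox_refl (n : nat) (S : 'M[int]_n -> Prop) (t : 'M[int]_n) : Prop :=
  exists u s, gen_by S u /\ S s /\ t = u *m s *m invmx u.

Definition len_lt (n : nat) (S : 'M[int]_n -> Prop) (u v : 'M[int]_n) : Prop :=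
  exists su sv, reduced_word S su u /\ reduced_word S sv v /\ (size su < size sv)%N.

Definition bruhat_step (n : nat) (S : 'M[int]_n -> Prop) (u v : 'M[int]_n) :=
  exists t, cox_refl S t /\ v = u *m t /\ len_lt S u v.

Definition bruhat (n : nat) (S : 'M[int]_n -> Prop) (w' w : 'M[int]_n) : Prop :=
  clos_refl_trans _ (bruhat_step S) w' w.

Section Weyl.
Variables (n m : nat) (root : 'I_m -> 'rV[int]_n) (coroot : 'I_m -> 'cV[int]_n)
  (f : 'cV[int]_n).

Definition all_refl (w : 'M[int]_n) : Prop := exists i, w = refl_mx root coroot i.
Definition inW : 'M[int]_n -> Prop := gen_by all_refl.
Definition simple_refl (w : 'M[int]_n) : Prop :=
  exists i, simple_in root f (fun _ => True) i /\ w = refl_mx root coroot i.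

Variable A : zmodType.

(* w L = (w^{-1})^* L, i.e. (w L)(lam) = L (w^{-1} lam) *)
Definition act (w : 'M[int]_n) (L : 'cV[int]_n -> A) : 'cV[int]_n -> A :=
  fun lam => L (invmx w *m lam).

Definition maps (w : 'M[int]_n) (L L' : 'cV[int]_n -> A) : Prop :=
  inW w /\ forall lam, act w L lam = L' lam.

(* Phi_L : (alpha^v)^* L trivial *)
Definition inPhiL (L : 'cV[int]_n -> A) (i : 'I_m) : Prop := L (coroot i) = 0.

Definition refl_L (L : 'cV[int]_n -> A) (w : 'M[int]_n) : Prop :=
  exists i, inPhiL L i /\ w = refl_mx root coroot i.
Definition inWo (L : 'cV[int]_n -> A) : 'M[int]_n -> Prop := gen_by (refl_L L).
Definition simple_refl_L (L : 'cV[int]_n -> A) (w : 'M[int]_n) : Prop :=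
  exists i, simple_in root f (inPhiL L) i /\ w = refl_mx root coroot i.

Definition block (L : 'cV[int]_n -> A) (b : 'M[int]_n) : 'M[int]_n -> Prop :=
  fun w => exists x, inWo L x /\ w = b *m x.

Definition block_prod (g bt : 'M[int]_n -> Prop) : 'M[int]_n -> Prop :=
  fun w => exists w1 w2, g w1 /\ bt w2 /\ w = w1 *m w2.

Definition min_in (bt : 'M[int]_n -> Prop) (wm : 'M[int]_n) : Prop :=
  bt wm /\ forall v, bt v -> bruhat simple_refl v wm -> v = wm.

Definition le_block (L : 'cV[int]_n -> A) (wm : 'M[int]_n) (w' w : 'M[int]_n) :=
  exists x x', inWo L x /\ inWo L x' /\ w = wm *m x /\ w' = wm *m x' /\
               bruhat (simple_refl_L L) x' x.

End Weyl.

Definition lmul (n : nat) (a w : 'M[int]_n) : 'M[int]_n := a *m w.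
Definition rmul (n : nat) (a w : 'M[int]_n) : 'M[int]_n := w *m a.

Definition poset_iso (T : Type) (P Q : T -> Prop) (leP leQ : T -> T -> Prop)
    (phi : T -> T) : Prop :=
  (forall w, P w -> Q (phi w)) /\
  (forall v, Q v -> exists w, P w /\ phi w = v) /\
  (forall w w', P w -> P w' -> phi w = phi w' -> w = w') /\
  (forall w w', P w -> P w' -> (leP w' w <-> leQ (phi w') (phi w))).

(* Main.v *)
Require Import Defs.
From HB Require Import structures.
From mathcomp Require Import all_boot all_order all_algebra.
From Stdlib Require Import Relations Classical.
From mathcomp Require Import ring lra zify.
Set Implicit Arguments. Unset Strict Implicit. Unset Printing Implicit Defensive.
Import Order.TTheory GRing.Theory Num.Theory.
Local Open Scope ring_scope.

Section Basics.
Variables (n m : nat) (root : 'I_m -> 'rV[int]_n) (coroot : 'I_m -> 'cV[int]_n).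
Hypothesis RD : root_datum root coroot.

Local Notation r := root.
Local Notation c := coroot.
Local Notation pr := (@pairing n).
Local Notation s := (refl_mx root coroot).

Lemma prE (x : 'rV[int]_n) (v : 'cV[int]_n) : x *m v = (pr x v)%:M.
Proof. by rewrite /pairing [LHS]mx11_scalar. Qed.

Lemma prDl x y v : pr (x + y) v = pr x v + pr y v.
Proof. by rewrite /pairing mulmxDl mxE. Qed.
Lemma prDr x v w : pr x (v + w) = pr x v + pr x w.
Proof. by rewrite /pairing mulmxDr mxE. Qed.
Lemma prNl x v : pr (- x) v = - pr x v.
Proof. by rewrite /pairing mulNmx mxE. Qed.
Lemma prNr x v : pr x (- v) = - pr x v.
Proof. by rewrite /pairing mulmxN mxE. Qed.
Lemma prBl x y v : pr (x - y) v = pr x v - pr y v.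
Proof. by rewrite prDl prNl. Qed.
Lemma prBr x v w : pr x (v - w) = pr x v - pr x w.
Proof. by rewrite prDr prNr. Qed.
Lemma prZl (a : int) x v : pr (a *: x) v = a * pr x v.
Proof. by rewrite /pairing -scalemxAl mxE. Qed.
Lemma prZr (a : int) x v : pr x (a *: v) = a * pr x v.
Proof. by rewrite /pairing -scalemxAr mxE. Qed.
Lemma prM x (A : 'M[int]_n) v : pr (x *m A) v = pr x (A *m v).
Proof. by rewrite /pairing mulmxA. Qed.

Lemma pr_rr i : pr (r i) (c i) = 2.
Proof. by case: RD => _ [H _]. Qed.

Definition rf (i j : 'I_m) : 'I_m :=
  odflt j [pick k | (r k == r j - pr (r j) (c i) *: r i) &&
                    (c k == c j - pr (r i) (c j) *: c i)].

Lemma rfE i j : r (rf i j) = r j - pr (r j) (c i) *: r i /\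
                c (rf i j) = c j - pr (r i) (c j) *: c i.
Proof.
rewrite /rf; case: pickP => [k /andP[/eqP -> /eqP ->] //|H].
case: RD => _ [_ [H3 _]]; have [k [e1 e2]] := H3 i j.
by move: (H k); rewrite e1 e2 !eqxx.
Qed.
Lemma rfr i j : r (rf i j) = r j - pr (r j) (c i) *: r i. Proof. by case: (rfE i j). Qed.
Lemma rfc i j : c (rf i j) = c j - pr (r i) (c j) *: c i. Proof. by case: (rfE i j). Qed.

Lemma r_inj : injective r. Proof. by case: RD. Qed.

Lemma r_s j i : r j *m s i = r (rf i j).
Proof. by rewrite rfr /refl_mx mulmxBr mulmx1 mulmxA prE mul_scalar_mx. Qed.
Lemma s_c i j : s i *m c j = c (rf i j).
Proof. by rewrite rfc /refl_mx mulmxBl mul1mx -mulmxA prE mul_mx_scalar. Qed.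

Lemma ss i : s i *m s i = 1%:M.
Proof.
rewrite /refl_mx mulmxBl mul1mx mulmxBr mulmx1 !mulmxA -(mulmxA (c i)) prE pr_rr.
rewrite mul_mx_scalar -scalemxAl scaler_nat.
rewrite mulr2n; set X := c i *m r i. rewrite opprB addrA. by rewrite addrA subrK addrK.
Qed.

Lemma rf_inv i j : rf i (rf i j) = j.
Proof. by apply: r_inj; rewrite -!r_s -mulmxA ss mulmx1. Qed.

Lemma rf_inj i : injective (rf i).
Proof. exact: can_inj (rf_inv i). Qed.

Definition nr (j : 'I_m) := rf j j.
Lemma nr_r j : r (nr j) = - r j.
Proof. by rewrite /nr rfr pr_rr scaler_nat mulr2n opprD addrA subrr add0r. Qed.
Lemma nr_c j : c (nr j) = - c j.
Proof. by rewrite /nr rfc pr_rr scaler_nat mulr2n opprD addrA subrr add0r. Qed.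
Lemma s_nr j : s (nr j) = s j.
Proof. by rewrite /refl_mx nr_r nr_c mulNmx mulmxN opprK. Qed.
Lemma nr_nr j : nr (nr j) = j.
Proof. by apply: r_inj; rewrite !nr_r opprK. Qed.

End Basics.
Section Words.
Variable (n : nat).
Implicit Types (S : 'M[int]_n -> Prop) (A B : 'M[int]_n).

Lemma word_prod_cat (s1 s2 : seq 'M[int]_n) :
  word_prod (s1 ++ s2) = word_prod s1 *m word_prod s2.
Proof. by elim: s1 => [|g s1 IH] /=; rewrite ?mul1mx // IH mulmxA. Qed.

Lemma word_prod_rcons (s1 : seq 'M[int]_n) g :
  word_prod (rcons s1 g) = word_prod s1 *m g.
Proof. by rewrite -cats1 word_prod_cat /= mulmx1. Qed.

Lemma is_word_cat S s1 s2 : is_word S s1 -> is_word S s2 -> is_word S (s1 ++ s2).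
Proof. by move=> H1 H2 g; rewrite mem_cat => /orP[/H1|/H2]. Qed.

Lemma is_word_cons S g s1 : is_word S (g :: s1) <-> S g /\ is_word S s1.
Proof.
split=> [H|[H1 H2] x]; last by rewrite inE => /orP[/eqP->|/H2].
by split; [apply: H; rewrite inE eqxx | move=> x Hx; apply: H; rewrite inE Hx orbT].
Qed.

Lemma is_word_rcons S g s1 : is_word S (rcons s1 g) <-> S g /\ is_word S s1.
Proof.
split=> [H|[H1 H2] x]; last by rewrite mem_rcons inE => /orP[/eqP->|/H2].
by split; [apply: H; rewrite mem_rcons inE eqxx | move=> x Hx; apply: H; rewrite mem_rcons inE Hx orbT].
Qed.

Lemma is_word_rev S s1 : is_word S s1 -> is_word S (rev s1).
Proof. by move=> H g; rewrite mem_rev; apply: H. Qed.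

Lemma is_word_map S S' (h : 'M[int]_n -> 'M[int]_n) s1 :
  (forall g, S g -> S' (h g)) -> is_word S s1 -> is_word S' (map h s1).
Proof. by move=> Hh H g /mapP[x Hx ->]; apply/Hh/H. Qed.

Lemma gen_1 S : gen_by S 1%:M.
Proof. by exists [::]. Qed.
Lemma gen_S S g : S g -> gen_by S g.
Proof. by move=> H; exists [:: g]; split; [move=> x; rewrite inE => /eqP->|rewrite /= mulmx1]. Qed.
Lemma gen_mul S u v : gen_by S u -> gen_by S v -> gen_by S (u *m v).
Proof.
move=> [s1 [H1 <-]] [s2 [H2 <-]]; exists (s1 ++ s2).
by split; [apply: is_word_cat|rewrite word_prod_cat].
Qed.
Lemma gen_mono S S' w : (forall g, S g -> gen_by S' g) -> gen_by S w -> gen_by S' w.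
Proof.
move=> H [s1 [H1 <-]]; elim: s1 H1 => [|g s1 IH] /=; first by move=> _; apply: gen_1.
by move/is_word_cons=> [Hg Hs]; apply: gen_mul; [apply: H| apply: IH].
Qed.

Lemma invmx_eq A B : A *m B = 1%:M -> invmx A = B.
Proof.
move=> AB; have [uA uB] := mulmx1_unit AB.
by rewrite -[invmx A]mulmx1 -AB mulmxA mulVmx // mul1mx.
Qed.

Definition invol S := forall g, S g -> g *m g = 1%:M.

Lemma word_inv S s1 : invol S -> is_word S s1 ->
  word_prod s1 *m word_prod (rev s1) = 1%:M.
Proof.
move=> HS; elim: s1 => [|g s1 IH] /=; first by rewrite mulmx1.
move/is_word_cons=> [Hg Hs]; rewrite rev_cons word_prod_rcons.
by rewrite mulmxA -(mulmxA g) IH // mulmx1 HS.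
Qed.

Lemma gen_unit S w : invol S -> gen_by S w -> w \in unitmx.
Proof. by move=> HS [s1 [H1 <-]]; case: (mulmx1_unit (word_inv HS H1)). Qed.

Lemma gen_inv S w : invol S -> gen_by S w -> gen_by S (invmx w).
Proof.
move=> HS [s1 [H1 <-]]; exists (rev s1); split; first exact: is_word_rev.
by rewrite (invmx_eq (word_inv HS H1)).
Qed.

Lemma mulmx_cancel_l p A (B B' : 'M[int]_(n,p)) : A \in unitmx -> A *m B = A *m B' -> B = B'.
Proof. by move=> uA e; rewrite -(mulKmx uA B) e mulKmx. Qed.
Lemma mulmx_cancel_r p A (B B' : 'M[int]_(p,n)) : A \in unitmx -> B *m A = B' *m A -> B = B'.
Proof. by move=> uA e; rewrite -(mulmxK uA B) e mulmxK. Qed.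

Lemma invmxM A B : A \in unitmx -> B \in unitmx -> invmx (A *m B) = invmx B *m invmx A.
Proof.
move=> uA uB; apply: invmx_eq.
by rewrite mulmxA -(mulmxA A) mulmxV // mulmx1 mulmxV.
Qed.

End Words.
Section Act.
Variables (n m : nat) (root : 'I_m -> 'rV[int]_n) (coroot : 'I_m -> 'cV[int]_n).
Hypothesis RD : root_datum root coroot.

Local Notation r := root.
Local Notation c := coroot.
Local Notation pr := (@pairing n).
Local Notation s := (refl_mx root coroot).
Local Notation rf := (rf root coroot).
Local Notation nr := (nr root coroot).

Definition ract (w : 'M[int]_n) j k := r k *m w = r j /\ w *m c j = c k.

Lemma ract_s i j : ract (s i) j (rf i j).
Proof. by split; rewrite ?r_s ?s_c // rf_inv. Qed.

Lemma ract_mul g w j k k' : ract w j k -> ract g k k' -> ract (g *m w) j k'.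
Proof. by move=> [e1 e2] [e3 e4]; split; rewrite ?mulmxA ?e3 // -mulmxA e2. Qed.

Lemma ract_1 j : ract 1%:M j j.
Proof. by split; rewrite ?mulmx1 ?mul1mx. Qed.

Lemma ract_uniq w j k k' : w \in unitmx -> ract w j k -> ract w j k' -> k = k'.
Proof.
move=> uw [e1 _] [e2 _]; apply: (r_inj RD).
by apply: (mulmx_cancel_r uw); rewrite e1 e2.
Qed.

Lemma ract_nr w j k : ract w j k -> ract w (nr j) (nr k).
Proof.
by move=> [e1 e2]; split; rewrite ?nr_r ?nr_c // ?mulNmx ?mulmxN ?e1 ?e2.
Qed.

Definition isR (S : 'M[int]_n -> Prop) := forall g, S g -> exists i, g = s i.

Lemma invol_R S : isR S -> invol S.
Proof. by move=> H g /H[i ->]; apply: ss. Qed.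

Lemma gen_ract S w : isR S -> gen_by S w -> forall j, exists k, ract w j k.
Proof.
move=> HS [s1 [H1 <-]]; elim: s1 H1 => [|g s1 IH] /= H1 j.
  by exists j; apply: ract_1.
move/is_word_cons: H1 => [/HS[i ->] Hs]; have [k Hk] := IH Hs j.
by exists (rf i k); apply: ract_mul Hk (ract_s _ _).
Qed.

Lemma gen_ract_surj S w : isR S -> gen_by S w -> forall k, exists j, ract w j k.
Proof.
move=> HS [s1 [H1 <-]]; elim: s1 H1 => [|g s1 IH] /= H1 k.
  by exists k; apply: ract_1.
move/is_word_cons: H1 => [/HS[i ->] Hs]; have [j Hj] := IH Hs (rf i k).
by exists j; apply: ract_mul Hj _; rewrite -{2}(rf_inv RD i k); apply: ract_s.
Qed.

Lemma ract_conj u j k : ract u j k -> u *m s j = s k *m u.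
Proof.
move=> [e1 e2]; rewrite /refl_mx mulmxBr mulmx1 mulmxBl mul1mx.
by rewrite mulmxA e2 -mulmxA e1.
Qed.

Lemma ract_conj' u j k : u \in unitmx -> ract u j k -> invmx u *m s k *m u = s j.
Proof.
move=> uu H; rewrite -mulmxA -(ract_conj H) mulmxA mulVmx // mul1mx //.
Qed.

Lemma ract_conj'' u j k : u \in unitmx -> ract u j k -> u *m s j *m invmx u = s k.
Proof. by move=> uu H; rewrite (ract_conj H) mulmxK. Qed.

Lemma ract_inv u j k : u \in unitmx -> ract u j k -> ract (invmx u) k j.
Proof.
move=> uu [e1 e2]; split.
  by rewrite -e1 mulmxK.
by rewrite -e2 mulKmx.
Qed.

Definition Qcl (Q : 'I_m -> Prop) := forall i j, Q i -> Q j -> Q (rf i j).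

Definition RQ (Q : 'I_m -> Prop) (w : 'M[int]_n) : Prop := exists i, Q i /\ w = s i.

Lemma isR_RQ Q : isR (RQ Q).
Proof. by move=> g [i [_ ->]]; exists i. Qed.

Lemma Qcl_nr Q j : Qcl Q -> Q j -> Q (nr j).
Proof. by move=> H Hj; apply: H. Qed.

Lemma gen_RQ_pres Q x j k : Qcl Q -> gen_by (RQ Q) x -> ract x j k -> (Q j <-> Q k).
Proof.
move=> HQ [s1 [H1 <-]]; elim: s1 H1 k => [|g s1 IH] /= H1 k Hx.
  by rewrite (ract_uniq (unitmx1 _ _) Hx (ract_1 j)).
move: Hx; move/is_word_cons: H1 => [[i [Qi ->]] Hs] Hx.
have [k' Hk'] := gen_ract (@isR_RQ Q) (ex_intro _ s1 (conj Hs erefl)) j.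
have Hu : s i *m word_prod s1 \in unitmx.
  apply: (gen_unit (invol_R (@isR_RQ Q))).
  by apply: gen_mul; [apply: gen_S; exists i | exists s1].
rewrite (ract_uniq Hu Hx (ract_mul Hk' (ract_s i k'))).
have [I1 I2] := IH Hs k' Hk'; split; first by move/I1; apply: HQ.
by move/(HQ i _ Qi); rewrite rf_inv.
Qed.

End Act.
Section Form.
Variables (n m : nat) (root : 'I_m -> 'rV[int]_n) (coroot : 'I_m -> 'cV[int]_n).
Hypothesis RD : root_datum root coroot.

Local Notation r := root.
Local Notation c := coroot.
Local Notation pr := (@pairing n).
Local Notation s := (refl_mx root coroot).
Local Notation rf := (rf root coroot).
Local Notation nr := (nr root coroot).

Definition fm (x y : 'rV[int]_n) : int := \sum_(k < m) pr x (c k) * pr y (c k).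

Lemma fmC x y : fm x y = fm y x.
Proof. by apply: eq_bigr => k _; rewrite mulrC. Qed.
Lemma fmDl x y z : fm (x + y) z = fm x z + fm y z.
Proof. by rewrite /fm -big_split; apply: eq_bigr => k _; rewrite prDl mulrDl. Qed.
Lemma fmNl x z : fm (- x) z = - fm x z.
Proof. by rewrite /fm -sumrN; apply: eq_bigr => k _; rewrite prNl mulNr. Qed.
Lemma fmZl a x z : fm (a *: x) z = a * fm x z.
Proof. by rewrite /fm mulr_sumr; apply: eq_bigr => k _; rewrite prZl mulrA. Qed.
Lemma fm0l z : fm 0 z = 0.
Proof. by rewrite -(scale0r (0 : 'rV[int]_n)) fmZl mul0r. Qed.
Lemma fmBl x y z : fm (x - y) z = fm x z - fm y z.
Proof. by rewrite fmDl fmNl. Qed.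

Lemma fm_s x y i : fm (x *m s i) (y *m s i) = fm x y.
Proof.
rewrite /fm (reindex_inj (rf_inj (i:=i) RD)) /=; apply: eq_bigr => k _.
by rewrite !prM !s_c ?rf_inv.
Qed.

Lemma xs x i : x *m s i = x - pr x (c i) *: r i.
Proof. by rewrite /refl_mx mulmxBr mulmx1 mulmxA prE mul_scalar_mx. Qed.

Lemma fm_key a x : 2 * fm (r a) x = pr x (c a) * fm (r a) (r a).
Proof.
have := fm_s (r a) x a; rewrite r_s // -/(nr a) nr_r // fmNl xs.
rewrite fmC fmBl fmZl fmC => e.
have -> : 2 * fm (r a) x = fm (r a) x + fm (r a) x by rewrite mulr2n mulrDl mul1r.
by rewrite opprB in e; rewrite -{1}e subrK.
Qed.

Lemma fm_ge0 x : 0 <= fm x x.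
Proof. by apply: sumr_ge0 => k _; rewrite -expr2 sqr_ge0. Qed.

Lemma fm_rr a : 4 <= fm (r a) (r a).
Proof.
rewrite /fm (bigD1 a) //= pr_rr //; rewrite -[4]addr0; apply: lerD => //.
by apply: sumr_ge0 => k _; rewrite -expr2 sqr_ge0.
Qed.

Lemma fm_rr_gt0 a : 0 < fm (r a) (r a).
Proof. by apply: Order.POrderTheory.lt_le_trans (fm_rr a). Qed.

Lemma sign_pos a x : (0 < pr x (c a)) = (0 < fm (r a) x).
Proof.
have A0 := fm_rr_gt0 a; have := fm_key a x.
move: (pr x (c a)) (fm (r a) x) (fm (r a) (r a)) A0 => p F A A0 e.
apply/idP/idP => H.
  by rewrite -(pmulr_rgt0 _ (ltr0n _ 2)) e mulr_gt0.
by rewrite -(pmulr_lgt0 _ A0) -e mulr_gt0.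
Qed.

Lemma sign_le0 a x : (pr x (c a) <= 0) = (fm (r a) x <= 0).
Proof. by rewrite !leNgt sign_pos. Qed.

Lemma fm_CS x y : 0 < fm x x -> fm x y ^+ 2 <= fm x x * fm y y.
Proof.
move=> Ap; set A := fm x x; set B := fm x y; set Y := fm y y.
have H : 0 <= \sum_(k < m) (A * pr y (c k) - B * pr x (c k)) ^+ 2.
  by apply: sumr_ge0 => k _; apply: sqr_ge0.
have E : \sum_(k < m) (A * pr y (c k) - B * pr x (c k)) ^+ 2 =
   \sum_(k < m) (A * A * (pr y (c k) * pr y (c k)) - 2 * A * B * (pr x (c k) * pr y (c k))
       + B * B * (pr x (c k) * pr x (c k))).
  by apply: eq_bigr => k _; ring.
rewrite E big_split sumrB /= -!mulr_sumr -/(fm y y) -/(fm x y) -/(fm x x) -/A -/B -/Y in H.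
have E2 : A * A * Y - 2 * A * B * B + B * B * A = A * (A * Y - B ^+ 2) by ring.
rewrite E2 in H.
by rewrite pmulr_rge0 // subr_ge0 in H.
Qed.

End Form.
Section Pos.
Variables (n m : nat) (root : 'I_m -> 'rV[int]_n) (coroot : 'I_m -> 'cV[int]_n)
  (f : 'cV[int]_n).
Hypothesis RD : root_datum root coroot.
Hypothesis GF : generic root f.

Local Notation r := root.
Local Notation c := coroot.
Local Notation pr := (@pairing n).
Local Notation s := (refl_mx root coroot).
Local Notation rf := (rf root coroot).
Local Notation nr := (nr root coroot).
Local Notation pos := (positive root f).
Local Notation fm := (fm coroot).
Local Notation ht j := (pr (r j) f).

Lemma pos_nr j : pos (nr j) <-> ~ pos j.
Proof.
rewrite /positive nr_r // prNl oppr_gt0; have := GF j.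
by case: ltgtP => // _ _; split.
Qed.

Lemma pr_suml (l : seq 'I_m) (P : pred 'I_m) v :
  pr (\sum_(i <- l | P i) r i) v = \sum_(i <- l | P i) pr (r i) v.
Proof.
apply: (big_morph (fun x => pr x v)) => [x y|]; first exact: prDl.
by rewrite /pairing mul0mx mxE.
Qed.

Lemma fm_suml (l : seq 'I_m) (P : pred 'I_m) y :
  fm (\sum_(i <- l | P i) r i) y = \sum_(i <- l | P i) fm (r i) y.
Proof.
apply: (big_morph (fun x => fm x y)) => [x z|]; first exact: fmDl.
exact: fm0l.
Qed.

Lemma dec Q b : Q b -> pos b ->
  exists l, (forall i, i \in l -> simple_in root f Q i) /\ r b = \sum_(i <- l) r i.
Proof.
suff H : forall N b, Q b -> pos b -> ht b <= N%:Z ->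
  exists l, (forall i, i \in l -> simple_in root f Q i) /\ r b = \sum_(i <- l) r i.
  move=> Qb pb; apply: (H `|ht b|%N) => //; rewrite /positive in pb; lia.
elim=> [|N IH] {}b Qb pb hb; first by rewrite /positive in pb; lia.
case: (classic (simple_in root f Q b)) => Hs.
  exists [:: b]; split; first by move=> i; rewrite inE => /eqP->.
  by rewrite big_cons big_nil addr0.
have [j [k [Qj [pj [Qk [pk e]]]]]] : exists j k, Q j /\ pos j /\ Q k /\ pos k /\ r b = r j + r k.
  by apply: NNPP => H; apply: Hs.
have hE : ht b = ht j + ht k by rewrite e prDl.
rewrite /positive in pj pk.
have [lj [Hj ej]] := IH j Qj pj ltac:(lia).
have [lk [Hk ek]] := IH k Qk pk ltac:(lia).
exists (lj ++ lk); split; first by move=> i; rewrite mem_cat => /orP[/Hj|/Hk].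
by rewrite big_cat /= e ej ek.
Qed.

Lemma split_sum (l : seq 'I_m) a :
  \sum_(i <- l) r i = (count (pred1 a) l)%:Z *: r a + \sum_(i <- l | i != a) r i.
Proof.
elim: l => [|x l IH]; first by rewrite !big_nil scale0r addr0.
rewrite !big_cons IH /=; case: eqP => [->|_] /=; rewrite PoszD scalerDl.
  by rewrite scale1r addrA.
by rewrite scale0r add0r addrCA.
Qed.

Lemma pos_sum0 (l : seq 'I_m) (P : pred 'I_m) (h : 'I_m -> int) :
  (forall i, i \in l -> P i -> 0 < h i) -> \sum_(i <- l | P i) h i = 0 ->
  forall i, i \in l -> ~~ P i.
Proof.
elim: l => [|x l IH] // Hp; rewrite big_cons.
have H0 : 0 <= \sum_(i <- l | P i) h i.
  rewrite big_seq_cond; apply: sumr_ge0 => i /andP[il Pi].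
  by apply: ltW; apply: Hp; rewrite // inE il orbT.
case Px: (P x) => /= e.
  have hx := Hp x (mem_head _ _) Px.
  have : 0 < h x + \sum_(j <- l | P j) h j.
    by apply: Order.POrderTheory.lt_le_trans hx _; rewrite lerDl; exact: H0.
  by rewrite e.
move=> i; rewrite inE => /orP[/eqP->|il]; first by rewrite Px.
by apply: IH => // j jl; apply: Hp; rewrite inE jl orbT.
Qed.

Lemma sum_pos_ex (l : seq 'I_m) (F : 'I_m -> int) :
  0 < \sum_(i <- l) F i -> exists i, i \in l /\ 0 < F i.
Proof.
elim: l => [|x l IH]; first by rewrite big_nil.
rewrite big_cons => H; case: (ltP 0 (F x)) => Hx; first by exists x; rewrite mem_head.
have [|i [il Fi]] := IH.
  by move: H; set S := \sum_(i <- l) F i => H; lia.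
by exists i; rewrite inE il orbT.
Qed.

Lemma rank2_absurd a g : a != g -> pr (r g) (c a) = 2 -> pr (r a) (c g) = 2 -> False.
Proof.
move=> ag e1 e2.
pose v := r a - r g.
have va : pr v (c a) = 0 by rewrite prBl pr_rr // e1 subrr.
have vg : pr v (c g) = 0 by rewrite prBl pr_rr // e2 subrr.
pose fix xs k := if k is k'.+1 then rf a (rf g (xs k')) else a.
have Hx : forall k, r (xs k) = r a + (2 * k%:Z) *: v.
  elim=> [|k IH] /=; first by rewrite mulr0 scale0r addr0.
  rewrite rfr // rfr // IH.
  have p1 : pr (r a + (2 * k%:Z) *: v) (c g) = 2 by rewrite prDl prZl vg mulr0 addr0 e2.
  rewrite p1.
  have p2 : pr (r a + (2 * k%:Z) *: v - 2 *: r g) (c a) = -2.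
    by rewrite prBl prDl !prZl va pr_rr // e1 mulr0 addr0.
  rewrite p2 scaleNr opprK.
  have -> : 2 * (k.+1)%:Z = 2 * k%:Z + 2 by lia.
  rewrite scalerDl /v scalerBr; set u := (2 * k%:Z) *: _.
  rewrite !addrA scalerBr addrA addrAC; by rewrite [LHS]addrAC.
have inj : injective (fun i : 'I_m.+1 => xs (nat_of_ord i)).
  move=> i j /(congr1 r); rewrite !Hx => /addrI /eqP.
  rewrite -subr_eq0 -scalerBl scalemx_eq0 => /orP[|].
    by rewrite subr_eq0 => /eqP e; apply: ord_inj; lia.
  by rewrite subr_eq0 => /eqP /(r_inj RD) /eqP; rewrite (negbTE ag).
by have := @leq_card _ _ (fun i : 'I_m.+1 => xs (nat_of_ord i)) inj; rewrite !card_ord ltnn.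
Qed.

Section Q.
Variable Q : 'I_m -> Prop.
Hypothesis QC : Qcl root coroot Q.
Local Notation simple := (simple_in root f Q).

Lemma diff1 a g : simple a -> simple g -> pr (r g) (c a) = 1 -> False.
Proof.
move=> [Qa [pa Ha]] [Qg [pg Hg]] e.
have rt : r (rf a g) = r g - r a by rewrite rfr // e scale1r.
have Qt : Q (rf a g) by apply: QC.
case: (boolP (0 < pr (r (rf a g)) f)) => pt.
  by apply: Hg; exists a, (rf a g); rewrite rt addrC subrK.
have pn : pos (nr (rf a g)) by apply/pos_nr => //; apply/negP.
apply: Ha; exists g, (nr (rf a g)); rewrite nr_r // rt; split => //; split => //.
split; first exact: Qcl_nr.
by split => //; rewrite opprB addrC subrK.
Qed.

Lemma nonpos a g : a != g -> simple a -> simple g -> pr (r g) (c a) <= 0.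
Proof.
move=> ag sa sg; rewrite leNgt; apply/negP => A1.
have F0 : 0 < fm (r a) (r g) by rewrite -(sign_pos RD).
have B1 : 0 < pr (r a) (c g) by rewrite (sign_pos RD) fmC.
have k1 := fm_key RD a (r g); have k2 := fm_key RD g (r a).
rewrite fmC in k2.
have CS := @fm_CS _ _ coroot _ (r g) (fm_rr_gt0 RD a).
have FA := fm_rr_gt0 RD a; have FG := fm_rr_gt0 RD g.
move: k1 k2 CS FA FG A1 B1.
set F := fm (r a) (r g); set A := fm (r a) (r a); set G := fm (r g) (r g).
set x := pr (r g) (c a); set y := pr (r a) (c g) => k1 k2 CS FA FG A1 B1.
have H4 : x * y * (A * G) <= 4 * (A * G).
  have -> : x * y * (A * G) = (2 * F) * (2 * F) by rewrite {1}k1 k2; ring.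
  have -> : 2 * F * (2 * F) = 4 * F ^+ 2 by ring.
  by rewrite ler_pM2l.
rewrite ler_pM2r ?mulr_gt0 // in H4.
have [x1|x1] := eqVneq x 1; first by apply: (diff1 sa sg).
have [y1|y1] := eqVneq y 1; first by apply: (diff1 sg sa).
have x2 : x = 2 by move: x1 y1; nia.
have y2 : y = 2 by move: x1 y1; nia.
exact: (rank2_absurd ag x2 y2).
Qed.

Lemma T1 a b : simple a -> Q b -> pos b -> b != a -> pos (rf a b).
Proof.
move=> sa Qb pb ba; apply: NNPP => npt.
have sa' := sa; case: sa' => [Qa [pa _]].
set t := rf a b.
have pd : pos (nr t) by apply/pos_nr.
have Qd : Q (nr t) by apply: Qcl_nr => //; apply: QC.
have [l1 [H1 e1]] := dec Qb pb.
have [l2 [H2 e2]] := dec Qd pd.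
set p := pr (r b) (c a).
have rd : r (nr t) = p *: r a - r b by rewrite nr_r // rfr // opprB.
set l := l1 ++ l2.
have Hl : forall i, i \in l -> simple i by move=> i; rewrite mem_cat => /orP[/H1|/H2].
have es : \sum_(i <- l) r i = p *: r a by rewrite big_cat /= -e1 -e2 rd addrC subrK.
have := split_sum l a; rewrite es.
set C := count_mem a l; set X := \sum_(i <- l | i != a) r i => eX.
have eX' : X = (p - C%:Z) *: r a by rewrite scalerBl eX addrC addKr.
set c' := p - C%:Z in eX'.
have Fle : fm (r a) X <= 0.
  rewrite fmC /X fm_suml big_seq_cond; apply: sumr_le0 => i /andP[il ia].
  rewrite fmC -(sign_le0 RD); apply: nonpos => //; [by rewrite eq_sym | exact: Hl].
have eXX : fm X X = c' * fm (r a) X by rewrite {1}eX' fmZl.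
have eXX2 : fm X X = c' ^+ 2 * fm (r a) (r a) by rewrite {1}eX' fmZl fmC eX' fmZl mulrA expr2.
have A0 := fm_rr_gt0 RD a.
have hX : pr X f = \sum_(i <- l | i != a) pr (r i) f by rewrite pr_suml.
have hX0 : 0 <= pr X f.
  rewrite hX big_seq_cond; apply: sumr_ge0 => i /andP[il _].
  by have [_ [+ _]] := Hl i il; apply: ltW.
have hXc : pr X f = c' * pr (r a) f by rewrite eX' prZl.
rewrite /positive in pa.
have c0 : c' = 0.
  case: (ltgtP c' 0) => // hc.
    by move: hX0; rewrite hXc pmulr_lge0 // leNgt hc.
  move: eXX; rewrite eXX2 => e.
  have : 0 < c' ^+ 2 * fm (r a) (r a) by rewrite mulr_gt0 // exprn_gt0.
  by rewrite e pmulr_rgt0 // ltNge Fle.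
have Hz := pos_sum0 (l := l) (P := fun i => i != a) (h := fun i => pr (r i) f).
have Hall : forall i, i \in l -> ~~ (i != a).
  apply: Hz; last by rewrite -hX hXc c0 mul0r.
  by move=> i il _; have [_ [+ _]] := Hl i il.
have := split_sum l1 a; rewrite -e1 (big1_seq (I := 'I_m)); last first.
  move=> i /andP[ia il]; have := Hall i; rewrite mem_cat il /= => /(_ isT).
  by rewrite ia.
rewrite addr0 => eb.
case: RD => _ [_ [_ Hred]]; have [h1|h1] := Hred _ _ _ eb.
  by move: eb; rewrite h1 scale1r => /(r_inj RD) /eqP; rewrite (negbTE ba).
move: pb; rewrite /positive eb h1 prZl mulN1r oppr_gt0 => h2.
by move: pa; rewrite ltNge (ltW h2).
Qed.

Lemma expos b : Q b -> pos b -> ~ simple b ->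
  exists a, simple a /\ 0 < pr (r b) (c a).
Proof.
move=> Qb pb nsb; have [l [Hl e]] := dec Qb pb.
have : 0 < fm (r b) (r b) by apply: fm_rr_gt0.
rewrite {1}e fm_suml => /sum_pos_ex [i [il Fi]].
by exists i; split; [apply: Hl|rewrite (sign_pos RD)].
Qed.

End Q.
End Pos.
Section Len.
Variable (n : nat).
Implicit Types (S : 'M[int]_n -> Prop).

Lemma reduced_ex S w : gen_by S w -> exists sw, reduced_word S sw w.
Proof.
move=> [s0 [H0 e0]].
suff : forall N s1, is_word S s1 -> word_prod s1 = w -> (size s1 <= N)%N ->
   exists sw, reduced_word S sw w by apply; eauto.
elim=> [|N IH] s1 H1 e1 hs.
  exists s1; split => //; split => // s' _ _; move: hs; rewrite leqn0 => /eqP ->.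
  by [].
case: (classic (forall s', is_word S s' -> word_prod s' = w -> (size s1 <= size s')%N)) => H.
  by exists s1.
have [s' Hs'] : exists s', is_word S s' /\ word_prod s' = w /\ (size s' < size s1)%N.
  apply: NNPP => H'; apply: H => s' a b; rewrite leqNgt; apply/negP => lt.
  by apply: H'; exists s'.
case: Hs' => [a [b c]]; apply: (IH s') => //; lia.
Qed.

Lemma reduced_size S s1 s2 w : reduced_word S s1 w -> reduced_word S s2 w -> size s1 = size s2.
Proof.
move=> [a [b c]] [d [e g]]; apply/eqP; rewrite eqn_leq.
by rewrite (c _ d e) (g _ a b).
Qed.

Lemma len_lt_asym S u v : len_lt S u v -> len_lt S v u -> False.
Proof.
move=> [su [sv [Hu [Hv lt]]]] [sv' [su' [Hv' [Hu' lt']]]].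
rewrite (reduced_size Hu Hu') (reduced_size Hv Hv') in lt; lia.
Qed.

Lemma len_lt_irr S u : len_lt S u u -> False.
Proof. by move=> H; apply: (len_lt_asym H H). Qed.

Lemma reduced_gen S s1 w : reduced_word S s1 w -> gen_by S w.
Proof. by move=> [a [b _]]; exists s1. Qed.

End Len.

Section Cox.
Variables (n m : nat) (root : 'I_m -> 'rV[int]_n) (coroot : 'I_m -> 'cV[int]_n)
  (f : 'cV[int]_n).
Hypothesis RD : root_datum root coroot.
Hypothesis GF : generic root f.

Local Notation r := root.
Local Notation c := coroot.
Local Notation pr := (@pairing n).
Local Notation s := (refl_mx root coroot).
Local Notation rf := (rf root coroot).
Local Notation nr := (nr root coroot).
Local Notation pos := (positive root f).
Local Notation ht j := (pr (r j) f).
Local Notation ract := (ract root coroot).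

Lemma s_unit i : s i \in unitmx.
Proof. by case: (mulmx1_unit (ss RD i)). Qed.
Lemma s_inv i : invmx (s i) = s i.
Proof. exact: invmx_eq (ss RD i). Qed.

Section Q.
Variable Q : 'I_m -> Prop.
Hypothesis QC : Qcl root coroot Q.
Local Notation simple := (simple_in root f Q).

Definition SQ (w : 'M[int]_n) : Prop := exists i, simple i /\ w = s i.

Lemma isR_SQ : isR root coroot SQ.
Proof. by move=> g [i [_ ->]]; exists i. Qed.
Lemma invol_SQ : invol SQ.
Proof. exact: (invol_R RD isR_SQ). Qed.
Lemma SQ_RQ w : gen_by SQ w -> gen_by (RQ root coroot Q) w.
Proof. by apply: gen_mono => g [i [[Qi _] ->]]; apply: gen_S; exists i. Qed.
Lemma gen_SQ_unit w : gen_by SQ w -> w \in unitmx.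
Proof. exact: gen_unit invol_SQ. Qed.

Lemma refl_in b : Q b -> gen_by SQ (s b) /\ cox_refl SQ (s b).
Proof.
move=> Qb.
suff H : forall N b, Q b -> pos b -> ht b <= N%:Z -> gen_by SQ (s b) /\ cox_refl SQ (s b).
  case: (boolP (0 < ht b)) => pb.
    by apply: (H `|ht b|%N) => //; lia.
  have pn : pos (nr b) by apply/(pos_nr RD GF); apply/negP.
  rewrite -(s_nr RD); apply: (H `|ht (nr b)|%N) => //; first exact: Qcl_nr.
  by rewrite /positive in pn; lia.
elim=> [|N IH] {Qb}b Qb pb hb; first by rewrite /positive in pb; lia.
case: (classic (simple b)) => sb.
  split; first by apply: gen_S; exists b.
  exists 1%:M, (s b); split; first exact: gen_1.
  by split; [exists b | rewrite mul1mx invmx1 mulmx1].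
have [a [sa pa]] := expos RD Qb pb sb.
have ba : b != a by apply/eqP => e; apply: sb; rewrite e.
have pb' := T1 RD GF QC sa Qb pb ba.
have Qb' : Q (rf a b) by apply: QC => //; case: sa.
have hb' : ht (rf a b) <= N%:Z.
  rewrite rfr // prBl prZl; have [_ [+ _]] := sa; rewrite /positive in pb.
  rewrite /positive => ha.
  have : 0 < pr (r b) (c a) * ht a by rewrite mulr_gt0.
  lia.
have [G1 [u [s0 [Gu [Ss0 e0]]]]] := IH _ Qb' pb' hb'.
have eb : s b = s a *m s (rf a b) *m s a.
  have := ract_conj (ract_s RD a (rf a b)); rewrite rf_inv // => ->.
  by rewrite -mulmxA ss // mulmx1.
have Sa : gen_by SQ (s a) by apply: gen_S; exists a.
split; first by rewrite eb; apply: gen_mul => //; apply: gen_mul.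
exists (s a *m u), s0; split; first exact: gen_mul.
split => //; rewrite eb e0 invmxM ?s_unit ?gen_SQ_unit // s_inv.
by rewrite !mulmxA.
Qed.

Lemma cox_char t : cox_refl SQ t -> exists b, Q b /\ pos b /\ t = s b.
Proof.
move=> [u [g [Gu [[i [[Qi _] ->]] ->]]]].
have [k Hk] := gen_ract RD isR_SQ Gu i.
have Qk : Q k by apply: (proj1 (gen_RQ_pres RD QC (SQ_RQ Gu) Hk) Qi).
rewrite (ract_conj'' (gen_SQ_unit Gu) Hk).
case: (boolP (0 < ht k)) => pk; first by exists k.
exists (nr k); rewrite (s_nr RD); split; first exact: Qcl_nr.
by split => //; apply/(pos_nr RD GF); apply/negP.
Qed.

Lemma key s1 b k : is_word SQ s1 -> Q b -> pos b -> ract (word_prod s1) b k -> ~ pos k ->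
  exists s', is_word SQ s' /\ (size s' < size s1)%N /\ word_prod s' = word_prod s1 *m s b.
Proof.
elim: s1 k => [|g s1 IH] k /= H1 Qb pb Hk npk.
  by rewrite (ract_uniq RD (unitmx1 _ _) Hk (ract_1 _ _ _)) in npk.
move: Hk; move/is_word_cons: H1 => [[a [sa ->]] Hs] Hk.
have Gy0 : gen_by SQ (word_prod s1) by exists s1.
have [k0 Hk0] := gen_ract RD isR_SQ Gy0 b.
have Gy : gen_by SQ (s a *m word_prod s1) by apply: gen_mul => //; apply: gen_S; exists a.
have ek := ract_uniq RD (gen_SQ_unit Gy) Hk (ract_mul Hk0 (ract_s RD a k0)).
case: (boolP (0 < ht k0)) => pk0; last first.
  have [s' [Hs' [lt e']]] := IH k0 Hs Qb pb Hk0 (fun h => (negP pk0) h).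
  exists (s a :: s'); split; first by apply/is_word_cons; split => //; exists a.
  by split; rewrite /= ?ltnS // e' mulmxA.
have Qk0 : Q k0 by apply: (proj1 (gen_RQ_pres RD QC (SQ_RQ Gy0) Hk0) Qb).
have k0a : k0 = a.
  apply/eqP; apply: NNPP => ne; apply: npk; rewrite ek.
  by apply: (T1 RD GF QC sa Qk0 pk0); apply/negP.
exists s1; split => //; split => //.
rewrite -mulmxA (ract_conj Hk0) k0a mulmxA ss // mul1mx //.
Qed.

Lemma LT1 y b k : gen_by SQ y -> Q b -> pos b -> ract y b k -> ~ pos k ->
  len_lt SQ (y *m s b) y.
Proof.
move=> Gy Qb pb Hk npk; have [sy Ry] := reduced_ex Gy.
case: (Ry) => [Hw [ey _]].
rewrite -ey in Hk; have [s' [Hs' [lt e']]] := key Hw Qb pb Hk npk.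
have [sr Rr] := reduced_ex (ex_intro (fun s => _) s' (conj Hs' e')).
rewrite ey in Rr; exists sr, sy; split => //; split => //.
case: Rr => [_ [_ +]] => /(_ s' Hs'); rewrite e' ey => /(_ erefl) le; lia.
Qed.

Lemma LT2 y b k : gen_by SQ y -> Q b -> pos b -> ract y b k -> pos k ->
  len_lt SQ y (y *m s b).
Proof.
move=> Gy Qb pb Hk pk.
have Gb : gen_by SQ (s b) by case: (refl_in Qb).
have Gy' : gen_by SQ (y *m s b) by apply: gen_mul.
have Hk' : ract (y *m s b) b (nr k).
  apply: ract_mul (ract_s RD b b) _; exact: ract_nr.
have := LT1 Gy' Qb pb Hk'; rewrite -mulmxA ss // mulmx1; apply.
by move/(pos_nr RD GF).
Qed.

Lemma LT3 y b k : gen_by SQ y -> Q b -> pos b -> ract y b k ->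
  len_lt SQ y (y *m s b) -> pos k.
Proof.
move=> Gy Qb pb Hk lt; apply: NNPP => npk.
exact: len_lt_asym lt (LT1 Gy Qb pb Hk npk).
Qed.

End Q.
End Cox.
Section Transport.
Variable (n : nat).
Variables (S1 S2 : 'M[int]_n -> Prop) (g : 'M[int]_n).
Hypothesis ug : g \in unitmx.
Hypothesis I1 : invol S1.
Local Notation phi M := (invmx g *m M *m g).
Local Notation psi M := (g *m M *m invmx g).
Hypothesis HS : forall M, S1 M <-> S2 (phi M).

Lemma phiM A B : phi (A *m B) = phi A *m phi B.
Proof. by rewrite !mulmxA (mulmxK ug). Qed.
Lemma phi1 : phi 1%:M = 1%:M.
Proof. by rewrite mulmx1 mulVmx. Qed.
Lemma phipsi M : phi (psi M) = M.
Proof. by rewrite !mulmxA mulVmx // mul1mx (mulmxKV ug). Qed.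
Lemma psiphi M : psi (phi M) = M.
Proof. by rewrite !mulmxA mulmxV // mul1mx (mulmxK ug). Qed.
Lemma HS' M : S2 M <-> S1 (psi M).
Proof. by rewrite HS phipsi. Qed.

Lemma wp_map s1 : word_prod (map (fun M => phi M) s1) = phi (word_prod s1).
Proof. by elim: s1 => [|x s1 IH] /=; rewrite ?phi1 // IH phiM. Qed.
Lemma wp_map' s1 : word_prod (map (fun M => psi M) s1) = psi (word_prod s1).
Proof.
elim: s1 => [|x s1 IH] /=; first by rewrite mulmx1 mulmxV.
by rewrite IH !mulmxA (mulmxKV ug).
Qed.

Lemma tr_word s1 : is_word S1 s1 -> is_word S2 (map (fun M => phi M) s1).
Proof. by apply: is_word_map => M /HS. Qed.

Lemma tr_gen w : gen_by S1 w -> gen_by S2 (phi w).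
Proof. by move=> [s1 [H1 <-]]; exists (map (fun M => phi M) s1); rewrite wp_map; split => //; apply: tr_word. Qed.

Lemma tr_reduced s1 w : reduced_word S1 s1 w -> reduced_word S2 (map (fun M => phi M) s1) (phi w).
Proof.
move=> [H1 [e1 Hm]]; split; first exact: tr_word.
split; first by rewrite wp_map e1.
move=> s' H' e'; rewrite size_map.
have := Hm (map (fun M => psi M) s'); rewrite size_map; apply.
  by apply: is_word_map H' => M /HS'.
by rewrite wp_map' e' psiphi.
Qed.

Lemma tr_len_lt u v : len_lt S1 u v -> len_lt S2 (phi u) (phi v).
Proof.
move=> [su [sv [Hu [Hv lt]]]]; exists (map (fun M => phi M) su), (map (fun M => phi M) sv).
by split; [|split]; rewrite ?size_map //; apply: tr_reduced.
Qed.

Lemma tr_cox t : cox_refl S1 t -> cox_refl S2 (phi t).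
Proof.
move=> [u [s0 [Gu [Ss ->]]]]; exists (phi u), (phi s0); split; first exact: tr_gen.
split; first by apply/HS.
have uu := gen_unit I1 Gu.
have E : phi (invmx u) = invmx (phi u).
  by apply/esym/invmx_eq; rewrite -phiM mulmxV // phi1.
by rewrite !phiM E.
Qed.

Lemma tr_bruhat x' x : bruhat S1 x' x -> bruhat S2 (phi x') (phi x).
Proof.
elim=> [y z [t [Ht [-> lt]]]| y | y z w _ IH1 _ IH2].
- apply: rt_step; exists (phi t); split; first exact: tr_cox.
  by rewrite phiM; split => //; rewrite -phiM; apply: tr_len_lt.
- exact: rt_refl.
- exact: rt_trans IH1 IH2.
Qed.

End Transport.

Section Main.
Variables (n m : nat) (root : 'I_m -> 'rV[int]_n) (coroot : 'I_m -> 'cV[int]_n)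
  (f : 'cV[int]_n).
Hypothesis RD : root_datum root coroot.
Hypothesis GF : generic root f.

Local Notation r := root.
Local Notation c := coroot.
Local Notation pr := (@pairing n).
Local Notation s := (refl_mx root coroot).
Local Notation rf := (rf root coroot).
Local Notation nr := (nr root coroot).
Local Notation pos := (positive root f).
Local Notation ract := (ract root coroot).
Local Notation S0 := (SQ root coroot f (fun _ => True)).
Local Notation inW := (inW root coroot).

Lemma QT : Qcl root coroot (fun _ => True). Proof. by []. Qed.

Lemma W_S0 w : inW w -> gen_by S0 w.
Proof.
apply: gen_mono => g [i ->].
by case: (refl_in RD GF QT (b := i) I).
Qed.

Lemma isR_all : isR root coroot (all_refl root coroot).
Proof. by move=> g [i ->]; exists i. Qed.

Lemma W_unit w : inW w -> w \in unitmx.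
Proof. exact: (gen_unit (invol_R RD isR_all)). Qed.

Lemma RQ_W Q w : gen_by (RQ root coroot Q) w -> inW w.
Proof. by apply: gen_mono => g [i [_ ->]]; apply: gen_S; exists i. Qed.

Lemma cox_S0 b : cox_refl S0 (s b).
Proof. by case: (refl_in RD GF QT (b := b) I). Qed.

Definition PQ (Q : 'I_m -> Prop) (u : 'M[int]_n) :=
  forall b k, Q b -> pos b -> ract u b k -> pos k.

Section Q.
Variable Q : 'I_m -> Prop.
Hypothesis QC : Qcl root coroot Q.

Lemma chain u y : PQ Q u -> inW u -> gen_by (SQ root coroot f Q) y ->
  bruhat S0 u (u *m y).
Proof.
move=> Pu Wu Gy; have [sy Ry] := reduced_ex Gy.
case: (Ry) => [_ [ey _]]; subst y; move: Ry; clear Gy.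
elim/last_ind: sy => [|s1 g IH] Ry; first by rewrite /= mulmx1; apply: rt_refl.
case: (Ry) => [/is_word_rcons [[a [sa eg]] Hs] [ep Hm]]; subst g.
have R1 : reduced_word (SQ root coroot f Q) s1 (word_prod s1).
  split => //; split => // s' Hs' e'.
  have := Hm (rcons s' (s a)); rewrite !size_rcons ltnS; apply.
    by apply/is_word_rcons; split => //; exists a.
  by rewrite !word_prod_rcons e'.
have Gy0 : gen_by (SQ root coroot f Q) (word_prod s1) by exists s1.
have [k Hk] := gen_ract RD (isR_SQ (f := f) (Q := Q)) Gy0 a.
have Qa : Q a by case: sa.
have lt : len_lt (SQ root coroot f Q) (word_prod s1) (word_prod s1 *m s a).
  exists s1, (rcons s1 (s a)); rewrite -word_prod_rcons size_rcons.
  by split => //; split => //.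
have pk := LT3 RD GF QC Gy0 Qa (proj1 (proj2 sa)) Hk lt.
have Qk : Q k by apply: (proj1 (gen_RQ_pres RD QC (SQ_RQ Gy0) Hk) Qa).
have [k2 Hk2] := gen_ract RD isR_all Wu k.
have pk2 := Pu _ _ Qk pk Hk2.
have Guy : gen_by S0 (u *m word_prod s1).
  by apply: gen_mul; [apply: W_S0 | apply: W_S0; apply: RQ_W (SQ_RQ Gy0)].
have lt2 := LT2 RD GF QT Guy I (proj1 (proj2 sa)) (ract_mul Hk Hk2) pk2.
rewrite word_prod_rcons mulmxA.
apply: rt_trans (IH R1) (rt_step _ _ _ _ _).
by exists (s a); split; [apply: cox_S0 | split].
Qed.

Lemma part3 u x' x : PQ Q u -> inW u -> bruhat (SQ root coroot f Q) x' x ->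
  bruhat S0 (u *m x') (u *m x).
Proof.
move=> Pu Wu; elim=> [y z [t [Ht [-> lt]]]| y | y z w _ IH1 _ IH2].
- have [b [Qb [pb et]]] := cox_char RD GF QC Ht; subst t.
  have Gy : gen_by (SQ root coroot f Q) y by case: lt => [su [sv [Hr _]]]; apply: reduced_gen Hr.
  have [k Hk] := gen_ract RD (isR_SQ (f := f) (Q := Q)) Gy b.
  have pk := LT3 RD GF QC Gy Qb pb Hk lt.
  have Qk : Q k by apply: (proj1 (gen_RQ_pres RD QC (SQ_RQ Gy) Hk) Qb).
  have [k2 Hk2] := gen_ract RD isR_all Wu k.
  have pk2 := Pu _ _ Qk pk Hk2.
  have Guy : gen_by S0 (u *m y).
    by apply: gen_mul; [apply: W_S0 | apply: W_S0; apply: RQ_W (SQ_RQ Gy)].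
  have lt2 := LT2 RD GF QT Guy I pb (ract_mul Hk Hk2) pk2.
  apply: rt_step; exists (s b); split; first exact: cox_S0.
  by rewrite mulmxA.
- exact: rt_refl.
- exact: rt_trans IH1 IH2.
Qed.

Lemma minchar (B : 'M[int]_n -> Prop) u wm :
  B u -> PQ Q u -> inW u ->
  (forall v, B v -> exists y, gen_by (RQ root coroot Q) y /\ v = u *m y) ->
  min_in root coroot f B wm -> wm = u.
Proof.
move=> Bu Pu Wu HB [Bw Hm]; have [y [Gy ey]] := HB _ Bw.
apply/esym; apply: Hm => //; rewrite ey; apply: chain => //.
by apply: gen_mono Gy => g [i [Qi ->]]; case: (refl_in RD GF QC Qi).
Qed.

Lemma PQ_conv u j k : PQ Q u -> inW u ->
  (forall j k, ract u j k -> (Q j <-> Q k)) -> ract u j k -> Q k -> pos k -> pos j.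
Proof.
move=> Pu Wu HQ Hk Qk pk; apply: NNPP => npj.
have pn : pos (nr j) by apply/(pos_nr RD GF).
have := Pu _ _ (Qcl_nr QC (proj2 (HQ _ _ Hk) Qk)) pn (ract_nr RD Hk).
by move/(pos_nr RD GF).
Qed.

End Q.
End Main.
Section Final.
Variables (n m : nat) (root : 'I_m -> 'rV[int]_n) (coroot : 'I_m -> 'cV[int]_n)
  (f : 'cV[int]_n).
Hypothesis RD : root_datum root coroot.
Hypothesis GF : generic root f.
Variable A : zmodType.

Local Notation r := root.
Local Notation c := coroot.
Local Notation pr := (@pairing n).
Local Notation s := (refl_mx root coroot).
Local Notation rf := (rf root coroot).
Local Notation nr := (nr root coroot).
Local Notation pos := (positive root f).
Local Notation ract := (ract root coroot).
Local Notation S0 := (SQ root coroot f (fun _ => True)).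
Local Notation inW := (inW root coroot).
Local Notation QL L := (inPhiL coroot L).
Local Notation RQ := (RQ root coroot).
Local Notation PQ := (PQ root coroot f).

Lemma QL_cl (L : {additive 'cV[int]_n -> A}) : Qcl root coroot (inPhiL coroot L).
Proof.
move=> i j Li Lj; rewrite /inPhiL rfc // raddfB.
have -> : pr (r i) (c j) *: c i = c i *~ pr (r i) (c j) by rewrite -scaler_int intz.
by rewrite raddfMz Li Lj mul0rz subr0.
Qed.

Lemma maps_Q (L L' : 'cV[int]_n -> A) b j k : maps root coroot b L L' -> ract b j k ->
  (QL L j <-> QL L' k).
Proof.
move=> [Wb HL] [_ e2]; rewrite /inPhiL -HL /act -e2 mulKmx ?(W_unit RD) //.
Qed.

Lemma block_W (L : 'cV[int]_n -> A) b w : inW b -> block root coroot L b w -> inW w.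
Proof. by move=> Wb [x [Gx ->]]; apply: gen_mul Wb (RQ_W (Q := QL L) Gx). Qed.

Lemma isR_RQ' Q : isR root coroot (RQ Q).
Proof. exact: isR_RQ. Qed.

Lemma block_Q (L L' : {additive 'cV[int]_n -> A}) b w j k :
  maps root coroot b L L' -> block root coroot L b w -> ract w j k -> (QL L j <-> QL L' k).
Proof.
move=> Hm [x [Gx ew]] Hk; have [Wb _] := Hm.
have [k0 Hk0] := gen_ract RD (@isR_RQ' (QL L)) Gx j.
have [k1 Hk1] := gen_ract RD (@isR_all _ _ root coroot) Wb k0.
have Ww : inW w by apply: (block_W (L := L) Wb); exists x; split.
have ek : k = k1 by apply: (ract_uniq RD (W_unit RD Ww) Hk); rewrite ew; apply: ract_mul Hk0 Hk1.
rewrite ek; exact: (iff_trans (gen_RQ_pres RD (QL_cl (L := L)) Gx Hk0) (maps_Q Hm Hk1)).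
Qed.

Lemma coset (L : 'cV[int]_n -> A) b w w' : inW b -> block root coroot L b w -> block root coroot L b w' ->
  gen_by (RQ (QL L)) (invmx w *m w').
Proof.
move=> Wb [x [Gx ->]] [x' [Gx' ->]].
have ux : x \in unitmx by apply: (W_unit RD); apply: (RQ_W (Q := QL L) Gx).
rewrite (invmxM (W_unit RD Wb) ux).
rewrite -mulmxA (mulmxA (invmx b)) mulVmx ?(W_unit RD) // mul1mx.
by apply: gen_mul Gx'; apply: gen_inv (invol_R RD (@isR_RQ' _)) Gx.
Qed.

Lemma conj1 (Q1 Q2 : 'I_m -> Prop) u z : inW u ->
  (forall j k, ract u j k -> (Q1 j <-> Q2 k)) -> gen_by (RQ Q2) z ->
  gen_by (RQ Q1) (invmx u *m z *m u).
Proof.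
move=> Wu HQ [s1 [H1 <-]]; have Uu := W_unit RD Wu.
elim: s1 H1 => [|g s1 IH] /= H1.
  by rewrite mulmx1 mulVmx //; apply: gen_1.
move/is_word_cons: H1 => [[k [Qk ->]] Hs].
have [j Hj] := gen_ract_surj RD (@isR_all _ _ root coroot) Wu k.
have -> : invmx u *m (s k *m word_prod s1) *m u =
  (invmx u *m s k *m u) *m (invmx u *m word_prod s1 *m u).
  by rewrite !mulmxA (mulmxK Uu).
rewrite (ract_conj' Uu Hj); apply: gen_mul; last exact: IH.
by apply: gen_S; exists j; split => //; apply: (proj2 (HQ _ _ Hj) Qk).
Qed.

Lemma conj2 (Q1 Q2 : 'I_m -> Prop) u x : inW u ->
  (forall j k, ract u j k -> (Q1 j <-> Q2 k)) -> gen_by (RQ Q1) x ->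
  gen_by (RQ Q2) (u *m x *m invmx u).
Proof.
move=> Wu HQ Gx; have Uu := W_unit RD Wu.
have := @conj1 Q2 Q1 (invmx u) x; rewrite invmxK; apply => //.
  exact: gen_inv (invol_R RD (@isR_all _ _ root coroot)) Wu.
move=> k j Hkj; have Ui : invmx u \in unitmx by rewrite unitmx_inv.
have := ract_inv Ui Hkj; rewrite invmxK => H.
by have := HQ _ _ H; case.
Qed.

Lemma min_P (L : 'cV[int]_n -> A) b wm : inW b ->
  min_in root coroot f (block root coroot L b) wm -> PQ (QL L) wm.
Proof.
move=> Wb [Bw Hm] be k Qbe pbe Hk; apply: NNPP => npk.
have Ww : inW wm := block_W Wb Bw.
have Bv : block root coroot L b (wm *m s be).
  case: Bw => [x [Gx ew]]; exists (x *m s be); split.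
    by apply: gen_mul Gx (gen_S _); exists be.
  by rewrite ew mulmxA.
have lt := LT1 RD GF (@QT _ _ root coroot) (W_S0 RD GF Ww) I pbe Hk npk.
have e : wm *m s be = wm.
  apply: Hm Bv (rt_step _ _ _ _ _); exists (s be); split; first exact: cox_S0.
  by rewrite -mulmxA ss // mulmx1.
have e1 : s be = 1%:M by apply: (mulmx_cancel_l (W_unit RD Ww)); rewrite e mulmx1.
have := s_c RD be be; rewrite e1 mul1mx -/(nr be) nr_c // => h.
by have := pr_rr RD be; rewrite {1}h prNr pr_rr.
Qed.

Lemma PQ_conv2 (Q1 Q2 : 'I_m -> Prop) u j k : Qcl root coroot Q1 -> PQ Q1 u ->
  (forall j k, ract u j k -> (Q1 j <-> Q2 k)) -> ract u j k -> Q2 k -> pos k -> pos j.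
Proof.
move=> QC Pu HQ Hk Qk pk; apply: NNPP => npj.
have pn : pos (nr j) by apply/(pos_nr RD GF).
have := Pu _ _ (Qcl_nr QC (proj2 (HQ _ _ Hk) Qk)) pn (ract_nr RD Hk).
by move/(pos_nr RD GF).
Qed.

Lemma PQ_comp (Q1 Q2 : 'I_m -> Prop) u v : inW u -> inW v -> PQ Q1 u -> PQ Q2 v ->
  (forall j k, ract u j k -> (Q1 j <-> Q2 k)) -> PQ Q1 (v *m u).
Proof.
move=> Wu Wv Pu Pv HQ b k Qb pb Hk.
have [k0 Hk0] := gen_ract RD (@isR_all _ _ root coroot) Wu b.
have [k1 Hk1] := gen_ract RD (@isR_all _ _ root coroot) Wv k0.
have Wvu : inW (v *m u) by apply: gen_mul.
rewrite (ract_uniq RD (W_unit RD Wvu) Hk (ract_mul Hk0 Hk1)).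
apply: Pv Hk1; last exact: Pu Hk0.
exact: (proj1 (HQ _ _ Hk0) Qb).
Qed.

Lemma simple_corr (Q1 Q2 : 'I_m -> Prop) u j k : Qcl root coroot Q1 -> Qcl root coroot Q2 ->
  inW u -> (forall j k, ract u j k -> (Q1 j <-> Q2 k)) -> PQ Q1 u -> ract u j k ->
  (simple_in root f Q1 j <-> simple_in root f Q2 k).
Proof.
move=> QC1 QC2 Wu HQ Pu Hk; have Uu := W_unit RD Wu; split.
  move=> [Qj [pj Hj]]; have Qk := proj1 (HQ _ _ Hk) Qj.
  split => //; split; first exact: Pu Hk.
  move=> [a' [b' [Qa' [pa' [Qb' [pb' e]]]]]]; apply: Hj.
  have [a Ha] := gen_ract_surj RD (@isR_all _ _ root coroot) Wu a'.
  have [b Hb] := gen_ract_surj RD (@isR_all _ _ root coroot) Wu b'.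
  exists a, b; split; first exact: (proj2 (HQ _ _ Ha) Qa').
  split; first exact: (PQ_conv2 QC1 Pu HQ Ha Qa' pa').
  split; first exact: (proj2 (HQ _ _ Hb) Qb').
  split; first exact: (PQ_conv2 QC1 Pu HQ Hb Qb' pb').
  case: Hk => [<- _]; case: Ha => [<- _]; case: Hb => [<- _].
  by rewrite e mulmxDl.
move=> [Qk [pk Hk']]; have Qj := proj2 (HQ _ _ Hk) Qk.
split => //; split; first exact: (PQ_conv2 QC1 Pu HQ Hk Qk pk).
move=> [a [b [Qa [pa [Qb [pb e]]]]]]; apply: Hk'.
have [a' Ha] := gen_ract RD (@isR_all _ _ root coroot) Wu a.
have [b' Hb] := gen_ract RD (@isR_all _ _ root coroot) Wu b.
exists a', b'; split; first exact: (proj1 (HQ _ _ Ha) Qa).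
split; first exact: Pu Ha.
split; first exact: (proj1 (HQ _ _ Hb) Qb).
split; first exact: Pu Hb.
apply: (mulmx_cancel_r Uu); rewrite mulmxDl.
by case: Hk => [-> _]; case: Ha => [-> _]; case: Hb => [-> _].
Qed.

Lemma prod_coset (L1 L2 L3 : {additive 'cV[int]_n -> A}) a g u1 u2 w1 w2 :
  maps root coroot a L1 L2 -> inW g ->
  block root coroot L2 g u1 -> block root coroot L2 g u2 ->
  block root coroot L1 a w1 -> block root coroot L1 a w2 ->
  gen_by (RQ (QL L1)) (invmx (u1 *m w1) *m (u2 *m w2)).
Proof.
move=> Ha Wg B1 B2 C1 C2; have [Wa _] := Ha.
have W1 := block_W Wg B1; have V1 := block_W Wa C1.
rewrite invmxM ?(W_unit RD) //.
have -> : invmx w1 *m invmx u1 *m (u2 *m w2) =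
   (invmx w1 *m (invmx u1 *m u2) *m w1) *m (invmx w1 *m w2).
  by rewrite !mulmxA (mulmxK (W_unit RD V1)).
apply: gen_mul; last exact: coset C1 C2.
apply: (conj1 (Q2 := QL L2)) => //; first by move=> j k; apply: block_Q Ha C1.
exact: coset B1 B2.
Qed.

End Final.
Theorem lemma4p8 (n m : nat) (root : 'I_m -> 'rV[int]_n)
  (coroot : 'I_m -> 'cV[int]_n) (f : 'cV[int]_n) (A : zmodType)
  (L L' : {additive 'cV[int]_n -> A}) (b : 'M[int]_n) :
  root_datum root coroot -> generic root f ->
  maps root coroot b L L' ->
  (* (1) *)
  (forall (L'' : {additive 'cV[int]_n -> A}) (c : 'M[int]_n),
     maps root coroot c L' L'' ->
     forall wb wc wcb,
       min_in root coroot f (block root coroot L b) wb ->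
       min_in root coroot f (block root coroot L' c) wc ->
       min_in root coroot f (block_prod (block root coroot L' c) (block root coroot L b)) wcb ->
       poset_iso (block root coroot L b)
         (block_prod (block root coroot L' c) (block root coroot L b))
         (le_block root coroot f L wb) (le_block root coroot f L wcb)
         (lmul wc)) /\
  (* (2) *)
  (forall (L'' : {additive 'cV[int]_n -> A}) (d : 'M[int]_n),
     maps root coroot d L'' L ->
     forall wb wd wbd,
       min_in root coroot f (block root coroot L b) wb ->
       min_in root coroot f (block root coroot L'' d) wd ->
       min_in root coroot f (block_prod (block root coroot L b) (block root coroot L'' d)) wbd ->
       poset_iso (block root coroot L b)
         (block_prod (block root coroot L b) (block root coroot L'' d))
         (le_block root coroot f L wb) (le_block root coroot f L'' wbd)
         (rmul wd)) /\
  (* (3) *)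
  (forall wb, min_in root coroot f (block root coroot L b) wb ->
     forall w w', block root coroot L b w -> block root coroot L b w' ->
       le_block root coroot f L wb w' w ->
       bruhat (simple_refl root coroot f) w' w).
Proof.
move=> RD GF Hb; have [Wb _] := Hb.
have isRa := @isR_all _ _ root coroot.
split; [|split].
- move=> L'' c0 Hc wb wc wcb Mb Mc Mcb; have [Wc _] := Hc.
  have Pb := min_P RD GF Wb Mb; have Pc := min_P RD GF Wc Mc.
  have Bwb := proj1 Mb; have Bwc := proj1 Mc.
  have Wwb := block_W Wb Bwb; have Wwc := block_W Wc Bwc.
  have Uwc := W_unit RD Wwc.
  have HQb : forall j k, ract root coroot wb j k -> (inPhiL coroot L j <-> inPhiL coroot L' k).
    move=> j k; exact: (block_Q RD Hb Bwb).
  have Pcb := PQ_comp RD Wwb Wwc Pb Pc HQb.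
  have ecb : wcb = wc *m wb.
    apply: (minchar RD GF (QL_cl RD (L := L))) Pcb _ _ Mcb.
    - by exists wc, wb.
    - exact: gen_mul.
    move=> v [w1 [w2 [B1 [B2 ->]]]]; exists (invmx (wc *m wb) *m (w1 *m w2)); split.
      exact: (prod_coset RD L'' Hb Wc Bwc B1 Bwb B2).
    by rewrite mulKVmx //; apply: (W_unit RD); apply: gen_mul.
  split; [|split; [|split]].
  + by move=> w Bw; exists wc, w.
  + move=> v [w1 [w2 [B1 [B2 ->]]]]; exists (invmx wc *m (w1 *m w2)).
    split; last by rewrite /lmul mulKVmx.
    have Gz := coset RD Wc Bwc B1.
    case: B2 => [x2 [Gx2 ->]].
    exists ((invmx b *m (invmx wc *m w1) *m b) *m x2); split.
      apply: gen_mul Gx2; apply: (conj1 RD Wb _ Gz).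
      move=> j k; exact: (maps_Q RD Hb).
    by rewrite !mulmxA mulmxV ?(W_unit RD Wb) // mul1mx.
  + by move=> w w' _ _; rewrite /lmul; apply: mulmx_cancel_l.
  + move=> w w' Bw Bw'; split.
      move=> [x [x' [Gx [Gx' [ew [ew' Hbr]]]]]]; exists x, x'.
      by rewrite /lmul ecb ew ew' !mulmxA; do !split.
    move=> [x [x' [Gx [Gx' [ew [ew' Hbr]]]]]]; exists x, x'.
    rewrite /lmul ecb -!mulmxA in ew ew'.
    have e1 := mulmx_cancel_l Uwc ew; have e2 := mulmx_cancel_l Uwc ew'.
    by do !split.
- move=> L'' d Hd wb wd wbd Mb Md Mbd; have [Wd _] := Hd.
  have Pb := min_P RD GF Wb Mb; have Pd := min_P RD GF Wd Md.
  have Bwb := proj1 Mb; have Bwd := proj1 Md.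
  have Wwb := block_W Wb Bwb; have Wwd := block_W Wd Bwd.
  have Uwd := W_unit RD Wwd.
  have HQd : forall j k, ract root coroot wd j k -> (inPhiL coroot L'' j <-> inPhiL coroot L k).
    move=> j k; exact: (block_Q RD Hd Bwd).
  have Pbd := PQ_comp RD Wwd Wwb Pd Pb HQd.
  have ebd : wbd = wb *m wd.
    apply: (minchar RD GF (QL_cl RD (L := L''))) Pbd _ _ Mbd.
    - by exists wb, wd.
    - exact: gen_mul.
    move=> v [w1 [w2 [B1 [B2 ->]]]]; exists (invmx (wb *m wd) *m (w1 *m w2)); split.
      exact: (prod_coset RD L' Hd Wb Bwb B1 Bwd B2).
    by rewrite mulKVmx //; apply: (W_unit RD); apply: gen_mul.
  have QC1 := QL_cl RD (L := L''); have QC2 := QL_cl RD (L := L).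
  have HS : forall M, simple_refl_L root coroot f L M <->
                      simple_refl_L root coroot f L'' (invmx wd *m M *m wd).
    move=> M; split.
      move=> [k [sk ->]]; have [j Hj] := gen_ract_surj RD isRa Wwd k.
      exists j; rewrite (ract_conj' Uwd Hj); split => //.
      exact: (proj2 (simple_corr RD GF QC1 QC2 Wwd HQd Pd Hj) sk).
    move=> [j [sj e]]; have [k Hk] := gen_ract RD isRa Wwd j.
    exists k; split; first exact: (proj1 (simple_corr RD GF QC1 QC2 Wwd HQd Pd Hk) sj).
    have -> : M = wd *m (invmx wd *m M *m wd) *m invmx wd.
      by rewrite !mulmxA mulmxV // mul1mx mulmxK.
    by rewrite e (ract_conj'' Uwd Hk).
  have I1 := @invol_SQ _ _ root coroot f RD (inPhiL coroot L).
  have I2 := @invol_SQ _ _ root coroot f RD (inPhiL coroot L'').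
  split; [|split; [|split]].
  + by move=> w Bw; exists w, wd.
  + move=> v [w1 [w2 [B1 [B2 ->]]]]; exists (w1 *m w2 *m invmx wd).
    split; last by rewrite /rmul mulmxKV.
    have Gy := conj2 RD Wwd HQd (coset RD Wd Bwd B2).
    case: B1 => [x1 [Gx1 ->]].
    exists (x1 *m (wd *m (invmx wd *m w2) *m invmx wd)); split.
      exact: gen_mul Gx1 Gy.
    by rewrite !mulmxA (mulmxK Uwd).
  + by move=> w w' _ _; rewrite /rmul; apply: mulmx_cancel_r.
  + move=> w w' Bw Bw'; split.
      move=> [x [x' [Gx [Gx' [ew [ew' Hbr]]]]]].
      exists (invmx wd *m x *m wd), (invmx wd *m x' *m wd).
      split; first exact: (conj1 RD Wwd HQd Gx).
      split; first exact: (conj1 RD Wwd HQd Gx').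
      split; first by rewrite /rmul ebd ew !mulmxA (mulmxK Uwd).
      split; first by rewrite /rmul ebd ew' !mulmxA (mulmxK Uwd).
      exact: (tr_bruhat Uwd I1 HS Hbr).
    move=> [y [y' [Gy [Gy' [ew [ew' Hbr]]]]]].
    rewrite /rmul in ew ew'.
    exists (wd *m y *m invmx wd), (wd *m y' *m invmx wd).
    split; first exact: (conj2 RD Wwd HQd Gy).
    split; first exact: (conj2 RD Wwd HQd Gy').
    split.
      apply: (mulmx_cancel_r Uwd); rewrite ew ebd !mulmxA (mulmxKV Uwd) //.
    split.
      apply: (mulmx_cancel_r Uwd); rewrite ew' ebd !mulmxA (mulmxKV Uwd) //.
    have Ui : invmx wd \in unitmx by rewrite unitmx_inv.
    have HS2 : forall M, simple_refl_L root coroot f L'' M <->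
        simple_refl_L root coroot f L (invmx (invmx wd) *m M *m invmx wd).
      by move=> M; rewrite invmxK; apply: (HS' Uwd HS M).
    by have := tr_bruhat Ui I2 HS2 Hbr; rewrite invmxK.
- move=> wb Mb w w' _ _ [x [x' [Gx [Gx' [-> [-> Hbr]]]]]].
  exact: (part3 RD GF (QL_cl RD (L := L)) (min_P RD GF Wb Mb) (block_W Wb (proj1 Mb)) Hbr).
Qed.
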